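(* Let $\mathcal{A},\mathcal{B},\mathcal{D},\mathcal{H},\tau,\mathcal{V}>0$ with $\mathcal{A}>2\mathcal{B}(\mathcal{H}+\sqrt{1+\mathcal{H}^2})$, and let $\mathbf{W}^\ast=(U^\ast,V^\ast,S^\ast,0)$ be any spatially homogeneous steady state of (S) with $V^\ast>0$ and $\mathcal{H}V^\ast<1$ (in particular the state $\mathbf{W}_R^\ast$ with $V^\ast=V_R=\frac{\mathcal{A}+\sqrt{\mathcal{A}^2-4\mathcal{B}(\mathcal{B}+\mathcal{A}\mathcal{H})}}{2(\mathcal{B}+\mathcal{A}\mathcal{H})}$ when $\mathcal{H}V_R<1$). Then for no real wavenumber $k\neq0$ does the dispersion relation $\det(\omega I+\mathrm{i}kM-\mathcal{L}^\ast)=0$ admit the root $\omega=0$. In other words, (S) admits no Turing (stationary) instability at such a steady state.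
   Context: The dimensionless model (S): $U_t-\mathcal{V}U_x=\mathcal{A}-U-UV^2$, $V_t+J_x=UV^2-\mathcal{B}V-\mathcal{H}SV$, $\mathcal{D}S_t=\mathcal{B}V+\mathcal{H}SV-S$, $\tau J_t+V_x=-J$. Written as $\mathbf{W}_t+M\mathbf{W}_x=\mathbf{N}(\mathbf{W})$ with $\mathbf{W}=(U,V,S,J)^T$, $\mathbf{N}=(\mathcal{A}-U-UV^2,\ UV^2-\mathcal{B}V-\mathcal{H}SV,\ (\mathcal{B}V+\mathcal{H}SV-S)/\mathcal{D},\ -J/\tau)^T$ and $M$ the $4\times4$ matrix with entries $M_{11}=-\mathcal{V}$, $M_{24}=1$, $M_{42}=1/\tau$ and all other entries zero. $\mathcal{L}^\ast$ is the Jacobian of $\mathbf{N}$ at $\mathbf{W}^\ast$, and $I$ the $4\times4$ identity. Homogeneous steady states with $V^\ast>0$ satisfy $U^\ast=\mathcal{B}/(V^\ast(1-\mathcal{H}V^\ast))$, $S^\ast=\mathcal{B}V^\ast/(1-\mathcal{H}V^\ast)$. *)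

(* Defs.v *)
From HB Require Import structures.
From mathcomp Require Import all_boot all_order all_algebra.
From mathcomp Require Import complex.
Set Implicit Arguments. Unset Strict Implicit. Unset Printing Implicit Defensive.
Import Order.TTheory GRing.Theory Num.Theory.
Local Open Scope ring_scope.

(* Model (S) written as W_t + M W_x = N(W), W = (U,V,S,J)^T (indices 0..3). *)

Definition Nvec (R : fieldType) (A B D H tau U V S J : R) : 'cV[R]_4 :=
  \col_(i < 4)
    match nat_of_ord i with
    | 0%N => A - U - U * V ^+ 2
    | 1%N => U * V ^+ 2 - B * V - H * S * V
    | 2%N => (B * V + H * S * V - S) / D
    | _ => - J / tau
    end.

Definition Mmat (R : fieldType) (Vc tau : R) : 'M[R]_4 :=
  \matrix_(i < 4, j < 4)
    match nat_of_ord i, nat_of_ord j with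
    | 0%N, 0%N => - Vc
    | 1%N, 3%N => 1
    | 3%N, 1%N => tau^-1
    | _, _ => 0
    end.

(* L* : the Jacobian matrix of N (w.r.t. (U,V,S,J)) at (U,V,S,J),
   written out entrywise (N is polynomial). *)
Definition Lstar (R : fieldType) (A B D H tau U V S J : R) : 'M[R]_4 :=
  \matrix_(i < 4, j < 4)
    match nat_of_ord i, nat_of_ord j with
    | 0%N, 0%N => - 1 - V ^+ 2
    | 0%N, 1%N => - (2 * U * V)
    | 1%N, 0%N => V ^+ 2
    | 1%N, 1%N => 2 * U * V - B - H * S
    | 1%N, 2%N => - (H * V)
    | 2%N, 1%N => (B + H * S) / D
    | 2%N, 2%N => (H * V - 1) / D
    | 3%N, 3%N => - tau^-1
    | _, _ => 0
    end.

Definition dispersion_matrix (R : rcfType)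
    (A B D H tau Vc U V S J : R) (omega : R[i]) (k : R) : 'M[R[i]]_4 :=
  omega%:M + ((Complex 0 1) * (real_complex R k)) *: map_mx (real_complex R) (Mmat Vc tau)
  - map_mx (real_complex R) (Lstar A B D H tau U V S J).

(* Main.v *)
Require Import Defs.
From HB Require Import structures.
From mathcomp Require Import all_boot all_order all_algebra.
From mathcomp Require Import complex.
From mathcomp Require Import ring lra.
Import Order.TTheory GRing.Theory Num.Theory.
Local Open Scope ring_scope.

Lemma det3 (R : comNzRingType) (M : 'M[R]_3) :
  let F i j := M (inord i) (inord j) in
  \det M = F 0%N 0%N * (F 1%N 1%N * F 2%N 2%N - F 1%N 2%N * F 2%N 1%N)
         - F 0%N 1%N * (F 1%N 0%N * F 2%N 2%N - F 1%N 2%N * F 2%N 0%N)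
         + F 0%N 2%N * (F 1%N 0%N * F 2%N 1%N - F 1%N 1%N * F 2%N 0%N).
Proof.
move=> F.
have ME i j : M i j = F i j by rewrite /F !inord_val.
rewrite (expand_det_row _ 0) !big_ord_recl big_ord0 /cofactor.
rewrite !(expand_det_row _ 0) !big_ord_recl !big_ord0 /cofactor !det_mx11 !mxE !ME /=.
rewrite /bump /=. clearbody F. ring.
Qed.

Lemma det4 (R : comNzRingType) (M : 'M[R]_4) :
  let F i j := M (inord i) (inord j) in
  \det M = F 0%N 0%N * (F 1%N 1%N * (F 2%N 2%N * F 3%N 3%N - F 2%N 3%N * F 3%N 2%N) - F 1%N 2%N * (F 2%N 1%N * F 3%N 3%N - F 2%N 3%N * F 3%N 1%N) + F 1%N 3%N * (F 2%N 1%N * F 3%N 2%N - F 2%N 2%N * F 3%N 1%N))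
          - F 0%N 1%N * (F 1%N 0%N * (F 2%N 2%N * F 3%N 3%N - F 2%N 3%N * F 3%N 2%N) - F 1%N 2%N * (F 2%N 0%N * F 3%N 3%N - F 2%N 3%N * F 3%N 0%N) + F 1%N 3%N * (F 2%N 0%N * F 3%N 2%N - F 2%N 2%N * F 3%N 0%N))
          + F 0%N 2%N * (F 1%N 0%N * (F 2%N 1%N * F 3%N 3%N - F 2%N 3%N * F 3%N 1%N) - F 1%N 1%N * (F 2%N 0%N * F 3%N 3%N - F 2%N 3%N * F 3%N 0%N) + F 1%N 3%N * (F 2%N 0%N * F 3%N 1%N - F 2%N 1%N * F 3%N 0%N))
          - F 0%N 3%N * (F 1%N 0%N * (F 2%N 1%N * F 3%N 2%N - F 2%N 2%N * F 3%N 1%N) - F 1%N 1%N * (F 2%N 0%N * F 3%N 2%N - F 2%N 2%N * F 3%N 0%N) + F 1%N 2%N * (F 2%N 0%N * F 3%N 1%N - F 2%N 1%N * F 3%N 0%N)).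
Proof.
move=> F.
have ME i j : M i j = F i j by rewrite /F !inord_val.
rewrite (expand_det_row _ 0) !big_ord_recl big_ord0 /cofactor !det3 /= !mxE.
rewrite !ME /=.
rewrite !inordK //.
rewrite /bump /=. clearbody F. ring.
Qed.

Section CX.
Variable R : rcfType.
Lemma cR (x : R) : x%:C%C = Complex x 0. Proof. by []. Qed.
Lemma c0 : (0 : R[i]) = Complex 0 0. Proof. by []. Qed.
Lemma cN (a b : R) : - Complex a b = Complex (- a) (- b). Proof. by []. Qed.
Lemma cD (a b c d : R) : Complex a b + Complex c d = Complex (a + c) (b + d). Proof. by []. Qed.
Lemma cM (a b c d : R) : Complex a b * Complex c d = Complex (a * c - b * d) (a * d + b * c). Proof. by []. Qed.
End CX.

Theorem mainTheorem7 (R : rcfType) (A B D H tau Vc : R)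
  (hA : 0 < A) (hB : 0 < B) (hD : 0 < D) (hH : 0 < H) (htau : 0 < tau) (hVc : 0 < Vc)
  (hcond : A > 2 * B * (H + Num.sqrt (1 + H ^+ 2)))
  (Us Vs Ss : R)
  (hsteady : Nvec A B D H tau Us Vs Ss 0 = 0)
  (hVpos : 0 < Vs) (hHV : H * Vs < 1) :
  forall k : R, k != 0 ->
    \det (dispersion_matrix A B D H tau Vc Us Vs Ss 0 0 k) != 0.
Proof.
move=> k hk.
rewrite det4 /= /dispersion_matrix !mxE /= !inordK //= !mul0rn !(cR, c0, cN, cD, cM).
have hs0 := congr1 (fun M : 'cV[R]_4 => M 0 0) hsteady.
rewrite !mxE /= in hs0.
have hU : 0 < Us.
  have e : Us * (1 + Vs ^+ 2) = A - (A - Us - Us * Vs ^+ 2) by ring.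
  rewrite hs0 subr0 in e.
  have h1 : 0 < 1 + Vs ^+ 2 by rewrite ltr_pwDl // sqr_ge0.
  by rewrite -(pmulr_lgt0 _ h1) e.
have tau0 : tau != 0 by rewrite gt_eqF.
have D0 : D != 0 by rewrite gt_eqF.
apply/eqP; case => hre him.
set q := (1 - H * Vs) / D.
set X := (k ^+ 2 - (2 * Us * Vs - B - H * Ss)) * q + H * Vs * ((B + H * Ss) / D).
move: him; set im := (Y in Y = 0) => him.
have eim : im = - (k * Vc / tau) * X.
  by rewrite /im /X /q; field; rewrite D0 tau0.
move: hre; set re := (Y in Y = 0) => hre.
have ere : re = ((1 + Vs ^+ 2) * X + 2 * Us * Vs ^+ 3 * q) / tau.
  by rewrite /re /X /q; field; rewrite D0 tau0.
have hX : X = 0.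
  have : (k * Vc / tau) * X = 0 by rewrite -[LHS]opprK -mulNr -eim him oppr0.
  move/eqP; rewrite mulf_eq0 => /orP[|/eqP//].
  by rewrite !mulf_eq0 invr_eq0 (negbTE hk) (negbTE tau0) (gt_eqF hVc).
have hq : 0 < q by rewrite divr_gt0 // subr_gt0.
have : 0 < re.
  rewrite ere hX mulr0 add0r divr_gt0 // mulr_gt0 // mulr_gt0 // ?mulr_gt0 // exprn_gt0.
by rewrite hre ltxx.
Qed.
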